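(* Let $K\subset\mathbb{R}$ be compact and $f:\mathbb{R}\to\mathbb{R}_+$ a continuous nonnegative function supported in $K$ with $f'\in C^\star_K$. Let $$u_2(x)=\frac{1}{4\pi}\int_{\mathbb{R}}\log\Big(\frac{y^2+(f(x+y)-f(x))^2}{y^2+(f(x+y)+f(x))^2}\Big)dy.$$ Then there are a constant $C$ depending only on $K$ and bounded functions $U,R$ such that for all $x\in\mathbb{R}$ $$u_2(x)=f(x)U(x)=-f(x)\big(1+R(x)\big),$$ with $\|U\|_{L^\infty}\le C\big(1+\|f'\|_D^6\big)$ and $\|R\|_{L^\infty}\le C\|f'\|_D\big(1+\|f'\|_{L^\infty}^5\big)$.
   Context: $\omega_h(r)=\sup_{|x-y|\le r}|h(x)-h(y)|$; $\|h\|_D=\int_0^1\frac{\omega_h(r)}{r}dr$; $C^\star_K$ is the space of bounded continuous functions supported in $K$ with $\|h\|_D<\infty$. *)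

(* Defs.v *)
From Stdlib Require Export Reals Rtopology.
Open Scope R_scope.

Definition modulus_at (h : R -> R) (r w : R) : Prop :=
  is_lub (fun v => exists x y, Rabs (x - y) <= r /\ v = Rabs (h x - h y)) w.

Definition sup_norm (h : R -> R) (M : R) : Prop :=
  is_lub (fun v => exists x, v = Rabs (h x)) M.

Definition improper_int_01 (g : R -> R) (L : R) : Prop :=
  (forall a, 0 < a <= 1 -> inhabited (Riemann_integrable g a 1)) /\
  forall eta, 0 < eta -> exists delta, 0 < delta /\
    forall a (Ha : 0 < a < delta) (Ha1 : a <= 1) (p : Riemann_integrable g a 1),
      Rabs (RiemannInt p - L) < eta.

Definition dini_norm (h : R -> R) (D : R) : Prop :=
  exists w : R -> R,
    (forall r, 0 < r <= 1 -> modulus_at h r (w r)) /\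
    improper_int_01 (fun r => w r / r) D.

Definition improper_int_pos (g : R -> R) (L : R) : Prop :=
  (forall a b, 0 < a -> a <= b -> inhabited (Riemann_integrable g a b)) /\
  forall eta, 0 < eta -> exists delta N, 0 < delta /\
    forall a b (Ha : 0 < a < delta) (Hb : N < b) (Hab : a <= b)
      (p : Riemann_integrable g a b),
      Rabs (RiemannInt p - L) < eta.

(* Improper integral over R (possible singularity only at 0 and at infinity):
   sum of the improper integrals over (0,+oo) and (-oo,0). *)
Definition improper_int_R (g : R -> R) (L : R) : Prop :=
  exists L1 L2, improper_int_pos g L1 /\ improper_int_pos (fun y => g (- y)) L2
                /\ L = L1 + L2.

Definition u2_integrand (f : R -> R) (x y : R) : R :=
  / (4 * PI) *
  ln ((y ^ 2 + (f (x + y) - f x) ^ 2) / (y ^ 2 + (f (x + y) + f x) ^ 2)).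

Definition in_Cstar (K : R -> Prop) (h : R -> R) : Prop :=
  (exists B, forall x, Rabs (h x) <= B) /\ continuity h /\
  (forall x, ~ K x -> h x = 0) /\ (exists D, dini_norm h D).

(* Main.v *)
Require Import Defs.
From Stdlib Require Import Reals Rtopology.
From Stdlib Require Import Lra Psatz ZArith Classical FunctionalExtensionality.
From Coquelicot Require Import Coquelicot.
Open Scope R_scope.

Lemma mvt_bound (k k' : R -> R) (a b B : R) :
  a <= b -> (forall c, a <= c <= b -> is_derive k c (k' c)) ->
  (forall c, a <= c <= b -> Rabs (k' c) <= B) ->
  Rabs (k b - k a) <= B * (b - a).
Proof.
  intros Hab Hd HB. destruct (Req_dec a b) as [->|Hne].
  - rewrite Rminus_diag, Rabs_R0, Rminus_diag, Rmult_0_r; lra.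
  - destruct (MVT_cor2 k k' a b) as [c [Hc1 Hc2]]; [lra| |].
    + intros c Hc; apply is_derive_Reals, Hd; exact Hc.
    + rewrite Hc1, Rabs_mult, (Rabs_right (b - a)) by lra.
      apply Rmult_le_compat_r; [lra|]. apply HB; lra.
Qed.

Lemma atan_lip u v : Rabs (atan u - atan v) <= Rabs (u - v).
Proof.
  destruct (Rle_dec v u) as [H|H].
  - assert (A := mvt_bound atan (fun x => /(1+x^2)) v u 1 H).
    rewrite (Rabs_right (u - v)) by lra. eapply Rle_trans; [apply A|lra].
    + intros; apply is_derive_Reals, derivable_pt_lim_atan.
    + intros c _. rewrite Rabs_right.
      * rewrite <- Rinv_1 at 2. apply Rinv_le_contravar; nra.
      * apply Rle_ge, Rlt_le, Rinv_0_lt_compat; nra.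
  - assert (A := mvt_bound atan (fun x => /(1+x^2)) u v 1 ltac:(lra)).
    rewrite Rabs_minus_sym, (Rabs_minus_sym u), (Rabs_right (v - u)) by lra.
    eapply Rle_trans; [apply A|lra].
    + intros; apply is_derive_Reals, derivable_pt_lim_atan.
    + intros c _. rewrite Rabs_right.
      * rewrite <- Rinv_1 at 2. apply Rinv_le_contravar; nra.
      * apply Rle_ge, Rlt_le, Rinv_0_lt_compat; nra.
Qed.

Lemma inv_sq_lip A B : Rabs (/(1+A^2) - /(1+B^2)) <= Rabs (A - B).
Proof.
  assert (HA : 0 < 1 + A^2) by nra. assert (HB : 0 < 1 + B^2) by nra.
  replace (/(1+A^2) - /(1+B^2)) with ((B - A) * ((B + A) / ((1+A^2)*(1+B^2))))
    by (field; lra).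
  rewrite Rabs_mult, Rabs_minus_sym.
  rewrite <- (Rmult_1_r (Rabs (A - B))) at 2.
  apply Rmult_le_compat_l; [apply Rabs_pos|].
  unfold Rdiv; rewrite Rabs_mult.
  rewrite (Rabs_right (/ _)) by (apply Rle_ge, Rlt_le, Rinv_0_lt_compat; nra).
  apply (Rmult_le_reg_r ((1 + A ^ 2) * (1 + B ^ 2))); [nra|].
  rewrite Rmult_assoc, Rinv_l by nra. rewrite Rmult_1_r, Rmult_1_l.
  destruct (Rcase_abs (B + A)) as [h|h];
    [rewrite Rabs_left by lra | rewrite Rabs_right by lra];
    assert (0 <= A^2*B^2) by (apply Rmult_le_pos; nra);
    assert (0 <= (A-1)^2) by apply pow2_ge_0; assert (0 <= (B-1)^2) by apply pow2_ge_0;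
    assert (0 <= (A+1)^2) by apply pow2_ge_0; assert (0 <= (B+1)^2) by apply pow2_ge_0; nra.
Qed.

Lemma atan_bnd u : Rabs (atan u) <= PI / 2.
Proof. destruct (atan_bound u). apply Rabs_le; lra. Qed.

Lemma atan_compl z : 0 < z -> 0 <= PI/2 - atan z <= / z.
Proof.
  intros Hz. rewrite <- atan_inv by exact Hz.
  assert (Hi : 0 < / z) by (apply Rinv_0_lt_compat; lra).
  split.
  - rewrite <- atan_0. destruct (Req_dec (/z) 0); [lra|].
    left. apply atan_increasing; lra.
  - assert (L := atan_lip (/ z) 0). rewrite atan_0, !Rminus_0_r in L.
    rewrite (Rabs_right (/z)) in L by lra. apply Rabs_le_between in L. lra.
Qed.

Lemma phi_lip u v s : 0 <= s ->
  Rabs ((atan u - atan (u+s)) - (atan v - atan (v+s))) <= s * Rabs (u - v).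
Proof.
  intros Hs.
  assert (M := mvt_bound (fun t => atan (u+t) - atan (v+t))
     (fun t => /(1+(u+t)^2) - /(1+(v+t)^2)) 0 s (Rabs (u - v)) Hs).
  simpl in M. rewrite !Rplus_0_r, Rminus_0_r in M.
  replace ((atan u - atan (u+s)) - (atan v - atan (v+s))) with
    (- (atan (u + s) - atan (v + s) - (atan u - atan v))) by ring.
  rewrite Rabs_Ropp, Rmult_comm. apply M.
  - intros c _. auto_derive; [trivial|]. simpl; ring.
  - intros c _. eapply Rle_trans; [apply inv_sq_lip|]. right; f_equal; ring.
Qed.

Lemma psi_bound b s : 0 <= s ->
  Rabs (2*atan b - atan (b+s) + atan (s-b)) <= 4 * Rabs b * s^2.
Proof.
  intros Hs.
  assert (M := mvt_bound (fun t => - atan (b+t) + atan (t-b))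
     (fun t => - /(1+(b+t)^2) + /(1+(t-b)^2)) 0 s (4 * Rabs b * s) Hs).
  cbv beta in M. rewrite Rplus_0_r, Rminus_0_r, Rminus_0_l, atan_opp in M.
  replace (2*atan b - atan (b+s) + atan (s-b)) with
    (- atan (b + s) + atan (s - b) - (- atan b + - atan b)) by ring.
  replace (4 * Rabs b * s^2) with (4 * Rabs b * s * s) by ring. apply M.
  - intros c _. auto_derive; [trivial|]. unfold Rminus; simpl; ring.
  - intros c Hc.
    assert (H1 : 0 < 1 + (b+c)^2) by (pose proof (pow2_ge_0 (b+c)); lra). assert (H2 : 0 < 1 + (c-b)^2) by (pose proof (pow2_ge_0 (c-b)); lra).
    replace (- /(1+(b+c)^2) + /(1+(c-b)^2)) with
      ((4*b*c) * /((1+(b+c)^2)*(1+(c-b)^2))) by (field; lra).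
    assert (H3 : 0 < (1+(b+c)^2)*(1+(c-b)^2)) by (apply Rmult_lt_0_compat; lra).
    rewrite Rabs_mult, (Rabs_right (/ _)) by (apply Rle_ge, Rlt_le, Rinv_0_lt_compat; lra).
    rewrite !Rabs_mult. rewrite (Rabs_right 4) by lra. rewrite (Rabs_right c) by lra.
    rewrite <- (Rmult_1_r (4 * Rabs b * s)).
    assert (0 <= Rabs b) by apply Rabs_pos.
    apply Rmult_le_compat; try nra.
    + apply Rlt_le, Rinv_0_lt_compat; lra.
    + rewrite <- Rinv_1. apply Rinv_le_contravar; [lra|].
      assert (0 <= (b+c)^2) by apply pow2_ge_0. assert (0 <= (c-b)^2) by apply pow2_ge_0. nra.
Qed.

Definition Nn (g : R -> R) a y := y^2 + (g y - a)^2.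
Definition Dn (g : R -> R) a y := y^2 + (g y + a)^2.
Definition Fint (g : R->R) (a y : R) := /(4*PI) * ln ((y^2 + (g y - a)^2)/(y^2 + (g y + a)^2)).
Definition Gprim (g : R -> R) a y := y * ln ((y^2 + (g y - a)^2)/(y^2 + (g y + a)^2))
  + 2*(g y - a)*(PI/2 - atan ((g y - a)/y)) - 2*(g y + a)*(PI/2 - atan ((g y + a)/y)).
Definition Dd (g : R -> R) a y := atan ((g y - a)/y) - atan ((g y + a)/y).

Lemma Gprim_deriv g p a y : 0 < y -> is_derive g y (p y) ->
  is_derive (Gprim g a) y (ln ((y^2 + (g y - a)^2)/(y^2 + (g y + a)^2)) - 2 * p y * Dd g a y).
Proof.
  intros Hy Hg. unfold Gprim, Dd.
  assert (HN : 0 < y^2 + (g y - a)^2) by (pose proof (pow2_ge_0 (g y - a)); nra).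
  assert (HD : 0 < y^2 + (g y + a)^2) by (pose proof (pow2_ge_0 (g y + a)); nra).
  auto_derive.
  - repeat split; try exact (ex_intro _ _ Hg); try lra.
    apply Rdiv_lt_0_compat; lra.
  - replace (Derive (fun x => g x) y) with (p y) by (symmetry; apply is_derive_unique; exact Hg).
    simpl. unfold Rminus, Rdiv. simpl in HN, HD.
    set (L := ln _). set (A1 := atan ((g y + - a) * / y)). set (A2 := atan ((g y + a) * / y)).
    field. repeat split; try lra.
Qed.

Lemma cont_mult (f h : R -> R) x : continuous f x -> continuous h x ->
  continuous (fun y => f y * h y) x.
Proof. intros H1 H2. exact (continuous_mult (K:=R_AbsRing) f h x H1 H2). Qed.

Definition qext (g p : R -> R) a y :=
  if Rlt_dec 0 y then p y * Dd g a y else p 0 * (atan (p 0) - PI/2).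

Lemma Dd_cont g p a y : 0 < y -> is_derive g y (p y) -> continuous (Dd g a) y.
Proof.
  intros Hy Hg. apply (ex_derive_continuous (K := R_AbsRing) (V := R_NormedModule) (Dd g a)). unfold Dd. auto_derive.
  repeat split; try exact (ex_intro _ _ Hg); lra.
Qed.

Lemma LN_cont g p a y : 0 < y -> is_derive g y (p y) ->
  continuous (fun y => ln ((y^2 + (g y - a)^2)/(y^2 + (g y + a)^2))) y.
Proof.
  intros Hy Hg. apply (ex_derive_continuous (K := R_AbsRing) (V := R_NormedModule) (fun y => ln ((y^2 + (g y - a)^2)/(y^2 + (g y + a)^2)))).
  assert (HN : 0 < y^2 + (g y - a)^2) by (pose proof (pow2_ge_0 (g y - a)); nra).
  assert (HD : 0 < y^2 + (g y + a)^2) by (pose proof (pow2_ge_0 (g y + a)); nra).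
  auto_derive. repeat split; try exact (ex_intro _ _ Hg); try lra.
  apply Rdiv_lt_0_compat; lra.
Qed.

Lemma Fint_cont g p a y : 0 < y -> is_derive g y (p y) -> continuous (Fint g a) y.
Proof.
  intros Hy Hg. unfold Fint. apply (cont_mult (fun _ => /(4*PI))); [apply continuous_const|].
  exact (LN_cont g p a y Hy Hg).
Qed.

Lemma locally_pos y : 0 < y -> locally y (fun z => 0 < z).
Proof. intros Hy. apply (open_gt 0 y Hy). Qed.

Lemma qext_cont_pos g p a y : 0 < y -> is_derive g y (p y) -> continuous p y ->
  continuous (qext g p a) y.
Proof.
  intros Hy Hg Hp.
  apply continuous_ext_loc with (g := fun z => p z * Dd g a z).
  - apply filter_imp with (2 := locally_pos y Hy). intros z Hz. unfold qext.
    destruct (Rlt_dec 0 z); [reflexivity|lra].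
  - apply cont_mult; [exact Hp|]. exact (Dd_cont g p a y Hy Hg).
Qed.


Lemma Dd_bnd g a y : Rabs (Dd g a y) <= PI.
Proof.
  unfold Dd. pose proof (atan_bound ((g y - a)/y)). pose proof (atan_bound ((g y + a)/y)).
  apply Rabs_le; lra.
Qed.

Lemma qext_cont0 g p a Mp : 0 < a -> g 0 = a -> (forall y, 0 <= g y) ->
  is_derive g 0 (p 0) -> continuous p 0 -> (forall y, Rabs (p y) <= Mp) ->
  continuous (qext g p a) 0.
Proof.
  intros Ha Hg0 Hgpos Hd Hpc HMp.
  apply continuity_pt_filterlim.
  apply continuity_pt_filterlim in Hpc.
  apply is_derive_Reals in Hd.
  unfold continuity_pt, continue_in, limit1_in, limit_in in *; simpl in *.
  unfold R_dist in *.
  intros eps Heps.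
  assert (HM : 0 <= Mp) by (eapply Rle_trans; [apply Rabs_pos|apply (HMp 0)]).
  set (e2 := eps / (4 * (Mp + 1))).
  assert (He2 : 0 < e2) by (unfold e2; apply Rdiv_lt_0_compat; lra).
  destruct (Hpc (eps / (4 * PI))) as [d1 [Hd1 H1]].
  { apply Rdiv_lt_0_compat; [lra|]. pose proof PI_RGT_0; lra. }
  destruct (Hd e2 He2) as [d2 H2].
  exists (Rmin d1 (Rmin d2 (a * e2))). split.
  { apply Rmin_pos; [lra|]. apply Rmin_pos; [apply cond_pos|]. nra. }
  intros z [_ Hz]. rewrite Rminus_0_r in Hz.
  unfold qext. destruct (Rlt_dec 0 0) as [h|_]; [lra|].
  destruct (Rlt_dec 0 z) as [Hzp|Hzn].
  2: { rewrite Rminus_diag, Rabs_R0. lra. }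
  rewrite Rabs_right in Hz by lra.
  assert (Hz1 : z < d1) by (eapply Rlt_le_trans; [exact Hz|apply Rmin_l]).
  assert (Hz2 : z < d2) by (eapply Rlt_le_trans; [exact Hz|eapply Rle_trans; [apply Rmin_r|apply Rmin_l]]).
  assert (Hz3 : z < a * e2) by (eapply Rlt_le_trans; [exact Hz|eapply Rle_trans; [apply Rmin_r|apply Rmin_r]]).
  assert (A1 : Rabs (p z - p 0) < eps / (4 * PI)).
  { apply H1. split; [split; [exact I|lra]|]. rewrite Rminus_0_r, Rabs_right; lra. }
  assert (A2 : Rabs ((g z - a) / z - p 0) < e2).
  { assert (HH := H2 z ltac:(lra) ltac:(rewrite Rabs_right; lra)).
    rewrite Rplus_0_l, Hg0 in HH. exact HH. }
  assert (A3 : 0 <= PI/2 - atan ((g z + a) / z) <= z / a).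
  { assert (Hq : 0 < (g z + a) / z) by (apply Rdiv_lt_0_compat; [pose proof (Hgpos z)|]; lra).
    destruct (atan_compl _ Hq) as [B1 B2]. split; [lra|].
    eapply Rle_trans; [exact B2|]. rewrite Rinv_div.
    apply Rmult_le_compat_l; [lra|]. apply Rinv_le_contravar; [lra|]. pose proof (Hgpos z); lra. }
  assert (A4 : Rabs (atan ((g z - a) / z) - atan (p 0)) < e2).
  { eapply Rle_lt_trans; [apply atan_lip|exact A2]. }
  replace (p z * Dd g a z - p 0 * (atan (p 0) - PI / 2)) with
    ((p z - p 0) * Dd g a z + p 0 * ((atan ((g z - a) / z) - atan (p 0)) + (PI/2 - atan ((g z + a) / z))))
    by (unfold Dd; ring).
  eapply Rle_lt_trans; [apply Rabs_triang|]. rewrite !Rabs_mult.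
  assert (B1 : Rabs (p z - p 0) * Rabs (Dd g a z) <= eps / (4 * PI) * PI).
  { apply Rmult_le_compat; try apply Rabs_pos; [lra|apply Dd_bnd]. }
  assert (B2 : Rabs (p 0) * Rabs (atan ((g z - a) / z) - atan (p 0) + (PI / 2 - atan ((g z + a) / z)))
           <= Mp * (e2 + e2)).
  { apply Rmult_le_compat; try apply Rabs_pos; [apply HMp|].
    eapply Rle_trans; [apply Rabs_triang|]. rewrite (Rabs_right (PI / 2 - atan ((g z + a) / z))) by lra.
    assert (z / a < e2).
    { apply (Rmult_lt_reg_r a); [lra|]. unfold Rdiv; rewrite Rmult_assoc, Rinv_l, Rmult_1_r by lra; lra. }
    lra. }
  assert (E1 : eps / (4 * PI) * PI = eps / 4) by (field; pose proof PI_RGT_0; lra).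
  assert (E2 : Mp * (e2 + e2) < eps / 2).
  { unfold e2. replace (Mp * (eps / (4 * (Mp + 1)) + eps / (4 * (Mp + 1)))) with
      ((eps / 2) * (Mp / (Mp + 1))) by (field; lra).
    rewrite <- (Rmult_1_r (eps/2)) at 2. apply Rmult_lt_compat_l; [lra|].
    apply (Rmult_lt_reg_r (Mp+1)); [lra|]. unfold Rdiv; rewrite Rmult_assoc, Rinv_l by lra; lra. }
  lra.
Qed.

Lemma cont_minus (f h : R -> R) x : continuous f x -> continuous h x ->
  continuous (fun y => f y - h y) x.
Proof. intros H1 H2. exact (continuous_minus (K:=R_AbsRing) (V:=R_NormedModule) f h x H1 H2). Qed.

Lemma RInt_formula g p a al be : 0 < al -> al <= be ->
  (forall y, is_derive g y (p y)) -> (forall y, continuous p y) ->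
  RInt (Fint g a) al be = /(4*PI) * (Gprim g a be - Gprim g a al) + /(2*PI) * RInt (qext g p a) al be.
Proof.
  intros Hal Hab Hg Hp.
  assert (Hm : Rmin al be = al) by (apply Rmin_left; lra).
  assert (HM : Rmax al be = be) by (apply Rmax_right; lra).
  set (df := fun y => ln ((y^2 + (g y - a)^2)/(y^2 + (g y + a)^2)) - 2 * p y * Dd g a y).
  assert (IG : is_RInt df al be (minus (Gprim g a be) (Gprim g a al))).
  { apply (is_RInt_derive (V:=R_CompleteNormedModule) (Gprim g a) df); rewrite Hm, HM; intros x Hx.
    - apply Gprim_deriv; [lra|apply Hg].
    - unfold df. apply cont_minus.
      + apply (LN_cont g p); [lra|apply Hg].
      + apply (cont_mult (fun y => 2 * p y)).
        * apply (cont_mult (fun _ => 2)); [apply continuous_const|apply Hp].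
        * apply (Dd_cont g p); [lra|apply Hg]. }
  assert (Iq : ex_RInt (qext g p a) al be).
  { apply (ex_RInt_continuous (V:=R_CompleteNormedModule)); rewrite Hm, HM; intros x Hx.
    apply qext_cont_pos; [lra|apply Hg|apply Hp]. }
  apply (RInt_correct (V:=R_CompleteNormedModule)) in Iq.
  apply is_RInt_unique.
  assert (IS := is_RInt_plus _ _ _ _ _ _ (is_RInt_scal _ _ _ (/(4*PI)) _ IG)
                                          (is_RInt_scal _ _ _ (/(2*PI)) _ Iq)).
  eapply is_RInt_ext; [|exact IS].
  - rewrite Hm, HM. intros x Hx. unfold df, Fint, qext, scal, plus; simpl.
    unfold mult; simpl. destruct (Rlt_dec 0 x); [|lra].
    field. pose proof PI_RGT_0; lra.
Qed.

Lemma Gprim_far g a be : 0 < be -> g be = 0 -> Gprim g a be = - 2 * PI * a.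
Proof.
  intros Hb Hg. unfold Gprim. rewrite Hg.
  replace ((be ^ 2 + (0 - a) ^ 2) / (be ^ 2 + (0 + a) ^ 2)) with 1
    by (field; pose proof (pow2_ge_0 a); nra).
  rewrite ln_1. replace ((0 - a) / be) with (- (a / be)) by (field; lra).
  rewrite atan_opp. rewrite Rplus_0_l. lra.
Qed.

Lemma qext_zero_far g p a Y be : 0 < Y -> Y <= be -> (forall y, Y <= y -> p y = 0) ->
  RInt (qext g p a) Y be = 0.
Proof.
  intros HY Hb Hp. rewrite (RInt_ext _ (fun _ => 0)).
  - rewrite RInt_const. unfold scal; simpl; unfold mult; simpl; ring.
  - intros x Hx. rewrite Rmin_left in Hx by lra. rewrite Rmax_right in Hx by lra.
    unfold qext. destruct (Rlt_dec 0 x); [|lra]. rewrite Hp by lra. apply Rmult_0_l.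
Qed.

Lemma qext_bnd g p a Mp y : (forall y, Rabs (p y) <= Mp) -> Rabs (qext g p a y) <= Mp * PI.
Proof.
  intros HM. unfold qext. destruct (Rlt_dec 0 y).
  - rewrite Rabs_mult. apply Rmult_le_compat; try apply Rabs_pos; [apply HM|apply Dd_bnd].
  - rewrite Rabs_mult. apply Rmult_le_compat; try apply Rabs_pos; [apply HM|].
    pose proof (atan_bound (p 0)). apply Rabs_le; lra.
Qed.

Lemma qext_ex g p a Mp u v : 0 <= u -> 0 <= v -> 0 < a -> g 0 = a -> (forall y, 0 <= g y) ->
  (forall y, is_derive g y (p y)) -> (forall y, continuous p y) -> (forall y, Rabs (p y) <= Mp) ->
  ex_RInt (qext g p a) u v.
Proof.
  intros Hu Hv Ha Hg0 Hgp Hg Hp HM.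
  apply (ex_RInt_continuous (V:=R_CompleteNormedModule)). intros z Hz.
  assert (0 <= z) by (eapply Rle_trans; [|apply Hz]; apply Rmin_glb; lra).
  destruct (Req_dec z 0) as [->|Hn].
  - apply (qext_cont0 g p a Mp); auto.
  - apply qext_cont_pos; auto; lra.
Qed.

Lemma x_ln_x al : 0 < al <= 1 -> al * Rabs (ln al) <= 2 * sqrt al.
Proof.
  intros Ha. assert (Hs : 0 < sqrt al) by (apply sqrt_lt_R0; lra).
  assert (Hl : ln al = 2 * ln (sqrt al)).
  { rewrite <- (sqrt_sqrt al) at 1 by lra. rewrite ln_mult by lra. ring. }
  assert (Hle : ln al <= 0) by (rewrite <- ln_1; apply ln_le; lra).
  rewrite Rabs_left1 by lra.
  assert (Hi : ln (/ sqrt al) <= / sqrt al).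
  { pose proof (exp_ineq1_le (ln (/ sqrt al))). rewrite exp_ln in H.
    lra. apply Rinv_0_lt_compat; lra. }
  rewrite ln_Rinv in Hi by lra.
  assert (al = sqrt al * sqrt al) by (rewrite sqrt_sqrt; lra).
  assert (- ln al <= 2 * / sqrt al) by lra.
  replace (2 * sqrt al) with (al * (2 * / sqrt al)).
  - apply Rmult_le_compat_l; lra.
  - rewrite H at 1. field. lra.
Qed.

Lemma ln_le_x x : 0 < x -> ln x <= x - 1.
Proof. intros Hx. pose proof (exp_ineq1_le (ln x)). rewrite exp_ln in H by lra. lra. Qed.

Lemma G_small g a : 0 < a -> g 0 = a -> (forall y, 0 <= g y) -> continuous g 0 ->
  forall eps, 0 < eps -> exists del, 0 < del /\
    forall al, 0 < al < del -> Rabs (Gprim g a al) < eps.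
Proof.
  intros Ha Hg0 Hgp Hc eps Heps.
  apply continuity_pt_filterlim in Hc.
  unfold continuity_pt, continue_in, limit1_in, limit_in in Hc; simpl in Hc; unfold R_dist in Hc.
  assert (HPI := PI_RGT_0).
  destruct (Hc (Rmin a (eps / (6 * PI)))) as [d1 [Hd1 H1]].
  { apply Rmin_pos; [lra|]. apply Rdiv_lt_0_compat; lra. }
  set (K1 := 3 + 9 * a^2).
  assert (HK1 : 0 < K1) by (unfold K1; pose proof (pow2_ge_0 a); lra).
  exists (Rmin (Rmin 1 d1) (Rmin (eps / (3 * K1)) ((eps/12)^2))).
  split.
  { repeat apply Rmin_pos; try lra. apply Rdiv_lt_0_compat; lra.
    apply pow_lt. lra. }
  intros al [Hal Hald].
  assert (Ha1 : al < 1) by (eapply Rlt_le_trans; [exact Hald|]; eapply Rle_trans; apply Rmin_l).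
  assert (Had1 : al < d1) by (eapply Rlt_le_trans; [exact Hald|]; eapply Rle_trans; [apply Rmin_l|apply Rmin_r]).
  assert (HaK : al < eps / (3 * K1)) by (eapply Rlt_le_trans; [exact Hald|]; eapply Rle_trans; [apply Rmin_r|apply Rmin_l]).
  assert (Hasq : al < (eps/12)^2) by (eapply Rlt_le_trans; [exact Hald|]; eapply Rle_trans; [apply Rmin_r|apply Rmin_r]).
  assert (Hh1 : Rabs (g al - a) < Rmin a (eps / (6 * PI))).
  { assert (HH := H1 al ltac:(split; [split; [exact I|lra]|]; rewrite Rminus_0_r, Rabs_right; lra)). rewrite Hg0 in HH. exact HH. }
  assert (Hh1a : Rabs (g al - a) < a) by (eapply Rlt_le_trans; [exact Hh1|apply Rmin_l]).
  assert (Hh1e : Rabs (g al - a) < eps / (6 * PI)) by (eapply Rlt_le_trans; [exact Hh1|apply Rmin_r]).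
  apply Rabs_def2 in Hh1a. pose proof (Hgp al) as Hgal.
  set (h1 := g al - a) in *. set (h2 := g al + a).
  assert (Hh2 : a <= h2 <= 3 * a) by (unfold h2, h1 in *; lra).
  set (N := al^2 + h1^2). set (D := al^2 + h2^2).
  assert (HN : al^2 <= N) by (unfold N; pose proof (pow2_ge_0 h1); lra).
  assert (Hal2 : 0 < al^2) by (apply pow_lt; lra).
  assert (HND : N <= D).
  { unfold N, D, h2, h1 in *. nra. }
  assert (HD : D <= 1 + 9 * a^2) by (unfold D; nra).
  assert (HlnN : ln al + ln al <= ln N).
  { rewrite <- ln_mult by lra. apply ln_le; [nra|]. simpl in HN. lra. }
  assert (HlnND : ln N <= ln D) by (apply ln_le; lra).
  assert (HlnD : ln D <= D - 1) by (apply ln_le_x; lra).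
  assert (Hxl := x_ln_x al ltac:(lra)).
  assert (Hsq : sqrt al < eps / 12).
  { rewrite <- (sqrt_pow2 (eps/12)) by lra. apply sqrt_lt_1_alt; lra. }
  assert (Hlnal : ln al <= 0) by (rewrite <- ln_1; apply ln_le; lra).
  rewrite Rabs_left1 in Hxl by lra.
  assert (T1 : Rabs (al * ln (N / D)) <= al * (1 + 9 * a^2) + 4 * sqrt al).
  { rewrite ln_div by lra. rewrite Rabs_mult, Rabs_right by lra.
    rewrite Rabs_left1 by lra. nra. }
  assert (T2 : Rabs (2 * h1 * (PI / 2 - atan (h1 / al))) <= 2 * Rabs h1 * PI).
  { rewrite !Rabs_mult, (Rabs_right 2) by lra. apply Rmult_le_compat_l.
    - pose proof (Rabs_pos h1); lra.
    - pose proof (atan_bound (h1/al)). apply Rabs_le; lra. }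
  assert (T3 : 0 <= 2 * h2 * (PI / 2 - atan (h2 / al)) <= 2 * al).
  { assert (Hq : 0 < h2 / al) by (apply Rdiv_lt_0_compat; lra).
    destruct (atan_compl _ Hq) as [B1 B2]. rewrite Rinv_div in B2.
    split; [apply Rmult_le_pos; lra|].
    replace (2 * al) with (2 * h2 * (al / h2)) by (field; lra).
    apply Rmult_le_compat_l; lra. }
  assert (E : Gprim g a al = al * ln (N/D) + 2*h1*(PI/2 - atan(h1/al)) - 2*h2*(PI/2 - atan(h2/al)))
    by reflexivity.
  rewrite E.
  assert (F1 : al * K1 < eps / 3).
  { apply (Rmult_lt_compat_r K1) in HaK; [|lra].
    replace (eps / (3 * K1) * K1) with (eps / 3) in HaK by (field; lra). exact HaK. }
  assert (F2 : 2 * Rabs h1 * PI < eps / 3).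
  { apply (Rmult_lt_compat_r (2 * PI)) in Hh1e; [|lra].
    replace (eps / (6 * PI) * (2 * PI)) with (eps / 3) in Hh1e by (field; lra). lra. }
  apply Rabs_le_between in T1. apply Rabs_le_between in T2.
  unfold K1 in F1.
  apply Rabs_def1; lra.
Qed.

Lemma side g p a Y Mp :
  0 < a -> g 0 = a -> (forall y, 0 <= g y) -> (forall y, is_derive g y (p y)) ->
  (forall y, continuous p y) -> 0 < Y -> (forall y, Y <= y -> g y = 0) ->
  (forall y, Y <= y -> p y = 0) -> (forall y, Rabs (p y) <= Mp) ->
  improper_int_pos (Fint g a) (-a/2 + /(2*PI) * RInt (qext g p a) 0 Y).
Proof.
  intros Ha Hg0 Hgp Hg Hp HY HgY HpY HM.
  assert (HPI := PI_RGT_0).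
  assert (HM0 : 0 <= Mp) by (eapply Rle_trans; [apply Rabs_pos|apply (HM 0)]).
  split.
  - intros a0 b0 Ha0 Hab. constructor. apply ex_RInt_Reals_0.
    apply (ex_RInt_continuous (V:=R_CompleteNormedModule)). intros z Hz.
    rewrite Rmin_left in Hz by lra. apply (Fint_cont g p); [lra|apply Hg].
  - intros eta Heta.
    assert (Hgc : continuous g 0).
    { apply (ex_derive_continuous (K := R_AbsRing) (V := R_NormedModule) g). exists (p 0); apply Hg. }
    destruct (G_small g a Ha Hg0 Hgp Hgc (2 * PI * eta)) as [dG [HdG HG]]; [nra|].
    exists (Rmin dG (eta / (Mp + 1))), Y. split.
    { apply Rmin_pos; [lra|]. apply Rdiv_lt_0_compat; lra. }
    intros al be Hal Hbe Hab pr.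
    rewrite <- RInt_Reals.
    assert (Hal1 : al < dG) by (eapply Rlt_le_trans; [apply Hal|apply Rmin_l]).
    assert (Hal2 : al < eta / (Mp + 1)) by (eapply Rlt_le_trans; [apply Hal|apply Rmin_r]).
    rewrite (RInt_formula g p a al be) by (auto; lra).
    rewrite (Gprim_far g a be) by (try apply HgY; lra).
    assert (Ex : forall u v, 0 <= u -> 0 <= v -> ex_RInt (qext g p a) u v).
    { intros u v Hu Hv. apply (qext_ex g p a Mp); auto. }
    assert (C1 := RInt_Chasles (V:=R_CompleteNormedModule) (qext g p a) 0 al be
                    (Ex 0 al ltac:(lra) ltac:(lra)) (Ex al be ltac:(lra) ltac:(lra))).
    assert (C2 := RInt_Chasles (V:=R_CompleteNormedModule) (qext g p a) 0 Y be
                    (Ex 0 Y ltac:(lra) ltac:(lra)) (Ex Y be ltac:(lra) ltac:(lra))).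
    rewrite (qext_zero_far g p a Y be) in C2 by (auto; lra).
    unfold plus in C1, C2; simpl in C1, C2.
    assert (Bq := abs_RInt_le_const (qext g p a) 0 al (Mp * PI) ltac:(lra)
                    (Ex 0 al ltac:(lra) ltac:(lra)) (fun t _ => qext_bnd g p a Mp t HM)).
    assert (BG := HG al ltac:(lra)).
    set (I0 := RInt (qext g p a) 0 al) in *.
    set (I1 := RInt (qext g p a) al be) in *.
    set (IY := RInt (qext g p a) 0 Y) in *.
    set (Ib := RInt (qext g p a) 0 be) in *.
    set (Ga := Gprim g a al) in *.
    replace I1 with (IY - I0) by lra.
    replace (/ (4 * PI) * (- 2 * PI * a - Ga) + / (2 * PI) * (IY - I0) - (- a / 2 + / (2 * PI) * IY))
      with (- (Ga / (4 * PI)) - I0 / (2*PI)) by (field; lra).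
    assert (B1 : Rabs (Ga / (4 * PI)) < eta / 2).
    { unfold Rdiv. rewrite Rabs_mult, (Rabs_right (/ (4*PI))) by (apply Rle_ge, Rlt_le, Rinv_0_lt_compat; lra).
      apply (Rmult_lt_reg_r (4 * PI)); [lra|]. rewrite Rmult_assoc, Rinv_l by lra. lra. }
    assert (B2 : Rabs (I0 / (2 * PI)) < eta / 2).
    { unfold Rdiv. rewrite Rabs_mult, (Rabs_right (/ (2*PI))) by (apply Rle_ge, Rlt_le, Rinv_0_lt_compat; lra).
      apply (Rmult_lt_reg_r (2 * PI)); [lra|]. rewrite Rmult_assoc, Rinv_l by lra.
      rewrite Rminus_0_r in Bq. eapply Rle_lt_trans; [rewrite Rmult_1_r; exact Bq|].
      apply (Rmult_lt_compat_r (Mp + 1)) in Hal2; [|lra].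
      replace (eta / (Mp + 1) * (Mp + 1)) with eta in Hal2 by (field; lra). nra. }
    unfold Rminus. eapply Rle_lt_trans; [apply Rabs_triang|]. rewrite Rabs_Ropp, Rabs_Ropp. lra.
Qed.

Lemma pw_bound a y b Mf W P1 P2 G1 G2 :
  0 < a -> 0 < y -> Rabs b <= Mf ->
  Rabs (P1 - b) <= W -> Rabs (P2 + b) <= W ->
  Rabs ((G1 - a)/y - b) <= W -> Rabs ((G2 - a)/y + b) <= W ->
  Rabs (P1 * (atan ((G1 - a)/y) - atan ((G1 + a)/y)) + P2 * (atan ((G2 - a)/y) - atan ((G2 + a)/y)))
  <= a * ((4 + 4 * Mf) * (W / y) + 32 * Mf * (1 + Mf) * (a / (y^2 + a^2))).
Proof.
  intros Ha Hy Hb H1 H2 H3 H4.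
  assert (HW : 0 <= W) by (eapply Rle_trans; [apply Rabs_pos|exact H1]).
  assert (HMf : 0 <= Mf) by (eapply Rle_trans; [apply Rabs_pos|exact Hb]).
  set (s := 2 * a / y).
  assert (Hs : 0 < s) by (unfold s; apply Rdiv_lt_0_compat; lra).
  set (u := (G1 - a)/y). set (v := (G2 - a)/y).
  change ((G1 - a)/y) with u in H3. change ((G2 - a)/y) with v in H4.
  assert (E1 : (G1 + a)/y = u + s) by (unfold u, s; field; lra).
  assert (E2 : (G2 + a)/y = v + s) by (unfold v, s; field; lra).
  rewrite E1, E2.
  set (phi := fun t => atan t - atan (t + s)).
  change (atan u - atan (u + s)) with (phi u). change (atan v - atan (v + s)) with (phi v).
  assert (Hphi : forall t, Rabs (phi t) <= s).
  { intros t. unfold phi. eapply Rle_trans; [apply atan_lip|].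
    replace (t - (t + s)) with (- s) by ring. rewrite Rabs_Ropp, Rabs_right; lra. }
  assert (Hlip : forall t t', Rabs (phi t - phi t') <= s * Rabs (t - t')).
  { intros t t'. unfold phi. apply phi_lip. lra. }
  replace (P1 * phi u + P2 * phi v) with
    ((P1 - b) * phi u + (P2 + b) * phi v + b * (phi u - phi b) - b * (phi v - phi (-b))
     + b * (phi b - phi (-b))) by ring.
  assert (T1 : Rabs ((P1 - b) * phi u) <= W * s).
  { rewrite Rabs_mult. apply Rmult_le_compat; try apply Rabs_pos; auto. }
  assert (T2 : Rabs ((P2 + b) * phi v) <= W * s).
  { rewrite Rabs_mult. apply Rmult_le_compat; try apply Rabs_pos; auto. }
  assert (T3 : Rabs (b * (phi u - phi b)) <= Mf * (s * W)).
  { rewrite Rabs_mult. apply Rmult_le_compat; try apply Rabs_pos; auto.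
    eapply Rle_trans; [apply Hlip|]. apply Rmult_le_compat_l; lra. }
  assert (T4 : Rabs (b * (phi v - phi (-b))) <= Mf * (s * W)).
  { rewrite Rabs_mult. apply Rmult_le_compat; try apply Rabs_pos; auto.
    eapply Rle_trans; [apply Hlip|]. apply Rmult_le_compat_l; [lra|].
    replace (v - - b) with (v + b) by ring. exact H4. }
  assert (Hpsi : phi b - phi (-b) = 2 * atan b - atan (b + s) + atan (s - b)).
  { unfold phi. rewrite atan_opp. replace (- b + s) with (s - b) by ring. ring. }
  assert (T5 : Rabs (b * (phi b - phi (-b))) <= 32 * Mf * (1 + Mf) * (a^2 / (y^2 + a^2))).
  { rewrite Hpsi, Rabs_mult.
    assert (Hy2 : 0 < y^2 + a^2) by (pose proof (pow2_ge_0 y); pose proof (pow2_ge_0 a); nra).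
    destruct (Rle_dec y a) as [Hya|Hya].
    - assert (Hq : 1/2 <= a^2 / (y^2 + a^2)).
      { replace (a^2 / (y^2 + a^2)) with (1/2 + (a^2 - y^2)/(2 * (y^2 + a^2))) by (field; lra).
        assert (0 <= (a^2 - y^2)/(2 * (y^2 + a^2))); [|lra].
        apply Rdiv_le_0_compat; [|lra]. nra. }
      assert (Hp : Rabs (2 * atan b - atan (b + s) + atan (s - b)) <= 2 * PI).
      { pose proof (atan_bound b). pose proof (atan_bound (b+s)). pose proof (atan_bound (s-b)).
        apply Rabs_le; lra. }
      pose proof PI_4.
      apply Rle_trans with (Mf * (2 * PI)).
      + apply Rmult_le_compat; try apply Rabs_pos; auto.
      + assert (0 <= Mf * Mf) by nra. nra.
    - pose proof (psi_bound b s ltac:(lra)) as Hp.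
      apply Rle_trans with (Mf * (4 * Mf * s^2)).
      + apply Rmult_le_compat; try apply Rabs_pos; auto.
        eapply Rle_trans; [exact Hp|]. apply Rmult_le_compat_r; [apply pow2_ge_0|lra].
      + unfold s. 
        replace (Mf * (4 * Mf * (2 * a / y) ^ 2)) with (16 * (Mf * Mf) * (a^2 / y^2)) by (field; lra).
        assert (Hq : a^2 / y^2 <= 2 * (a^2 / (y^2 + a^2))).
        { replace (2 * (a^2/(y^2+a^2))) with (a^2 / ((y^2+a^2)/2)) by (field; lra).
          unfold Rdiv. apply Rmult_le_compat_l; [apply pow2_ge_0|]. apply Rinv_le_contravar; [lra|].
          assert (a <= y) by lra. nra. }
        assert (0 <= a^2 / y^2) by (apply Rdiv_le_0_compat; [apply pow2_ge_0|apply pow_lt; lra]).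
        assert (0 <= Mf * Mf) by nra. nra. }
  assert (Ea : a * ((4 + 4 * Mf) * (W / y) + 32 * Mf * (1 + Mf) * (a / (y ^ 2 + a ^ 2)))
    = W * s + W * s + Mf * (s * W) + Mf * (s * W) + 32 * Mf * (1 + Mf) * (a ^ 2 / (y ^ 2 + a ^ 2))).
  { unfold s. field. split; [|lra]. pose proof (pow2_ge_0 y); pose proof (pow2_ge_0 a); nra. }
  rewrite Ea.
  repeat (eapply Rle_trans; [apply Rabs_triang|]; apply Rplus_le_compat; [|assumption]).
  unfold Rminus. eapply Rle_trans; [apply Rabs_triang|]. rewrite Rabs_Ropp.
  apply Rplus_le_compat; [|assumption].
  eapply Rle_trans; [apply Rabs_triang|]. apply Rplus_le_compat; [|assumption].
  eapply Rle_trans; [apply Rabs_triang|]. apply Rplus_le_compat; assumption.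
Qed.

Lemma nat_above r : exists n : nat, r < INR n.
Proof.
  destruct (archimed r) as [H _]. destruct (up r) as [|p|p] eqn:E.
  - exists 0%nat. simpl. simpl in H. lra.
  - exists (Pos.to_nat p). rewrite INR_IZR_INZ, positive_nat_Z. exact H.
  - exists 0%nat. simpl. assert (IZR (Z.neg p) < 0) by (apply IZR_lt; lia). lra.
Qed.

Lemma sup_le h M z : sup_norm h M -> Rabs (h z) <= M.
Proof. intros [H _]. apply H. exists z. reflexivity. Qed.

Lemma modulus_le h r w u v : modulus_at h r w -> Rabs (u - v) <= r -> Rabs (h u - h v) <= w.
Proof. intros [H _] Huv. apply H. exists u, v. split; [exact Huv|reflexivity]. Qed.

Lemma modulus_mono h r1 r2 w1 w2 : modulus_at h r1 w1 -> modulus_at h r2 w2 -> r1 <= r2 -> w1 <= w2.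
Proof.
  intros H1 [H2 _] Hr. apply H1. intros v [u [u' [Hu ->]]]. apply H2. exists u, u'. split; [lra|reflexivity].
Qed.

Lemma modulus_nonneg h r w : 0 <= r -> modulus_at h r w -> 0 <= w.
Proof.
  intros Hr [H _]. apply H. exists 0, 0. split.
  - rewrite Rminus_0_r, Rabs_R0; exact Hr.
  - rewrite Rminus_diag, Rabs_R0; reflexivity.
Qed.

Lemma dini_int w Df : improper_int_01 (fun r => w r / r) Df ->
  forall eta, 0 < eta -> exists del, 0 < del /\ forall al, 0 < al < del -> al <= 1 ->
    ex_RInt (fun r => w r / r) al 1 /\ RInt (fun r => w r / r) al 1 <= Df + eta.
Proof.
  intros [Hi Hl] eta Heta. destruct (Hl eta Heta) as [del [Hdel H]].
  exists del. split; [exact Hdel|]. intros al Hal Hal1.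
  destruct (Hi al ltac:(lra)) as [pr].
  split; [apply ex_RInt_Reals_1; exact pr|].
  rewrite (RInt_Reals _ _ _ pr). specialize (H al Hal Hal1 pr). apply Rabs_def2 in H. lra.
Qed.

Lemma w_half_le f' w Df : (forall r, 0 < r <= 1 -> modulus_at f' r (w r)) ->
  improper_int_01 (fun r => w r / r) Df -> w (1/2) <= 2 * Df.
Proof.
  intros Hw Hd.
  assert (Hw0 : 0 <= w (1/2)) by (apply (modulus_nonneg f' (1/2)); [lra|apply Hw; lra]).
  apply Rle_plus_epsilon. intros eps Heps.
  destruct (dini_int w Df Hd (eps/2) ltac:(lra)) as [del [Hdel H]].
  set (al := Rmin (del/2) (1/4)).
  assert (Hal : 0 < al < del) by (unfold al; split; [apply Rmin_pos; lra|]; eapply Rle_lt_trans; [apply Rmin_l|lra]).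
  assert (Hal2 : al <= 1/4) by apply Rmin_r.
  destruct (H al Hal ltac:(lra)) as [Ex Hle].
  assert (E1 : ex_RInt (fun r => w r / r) al (1/2)) by (apply (ex_RInt_Chasles_1 (V:=R_CompleteNormedModule) _ _ _ 1); [lra|exact Ex]).
  assert (E2 : ex_RInt (fun r => w r / r) (1/2) 1) by (apply (ex_RInt_Chasles_2 (V:=R_CompleteNormedModule) _ al); [lra|exact Ex]).
  assert (C := RInt_Chasles (V:=R_CompleteNormedModule) _ _ _ _ E1 E2). unfold plus in C; simpl in C.
  assert (P1 : 0 <= RInt (fun r => w r / r) al (1/2)).
  { apply RInt_ge_0; [lra|exact E1|]. intros x Hx. apply Rdiv_le_0_compat; [|lra].
    apply (modulus_nonneg f' x); [lra|apply Hw; lra]. }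
  assert (P2 : RInt (fun _ => w (1/2)) (1/2) 1 <= RInt (fun r => w r / r) (1/2) 1).
  { apply RInt_le; [lra|apply (ex_RInt_const (V:=R_NormedModule))|exact E2|]. intros x Hx.
    assert (w (1/2) <= w x) by (apply (modulus_mono f' (1/2) x); [apply Hw; lra|apply Hw; lra|lra]).
    apply (Rmult_le_reg_r x); [lra|]. unfold Rdiv. rewrite Rmult_assoc, Rinv_l by lra. nra. }
  rewrite RInt_const in P2. unfold scal in P2; simpl in P2; unfold mult in P2; simpl in P2.
  lra.
Qed.

Lemma chain (h : R -> R) W z : (forall u v, Rabs (u - v) <= 1/2 -> Rabs (h u - h v) <= W) ->
  forall k : nat, Rabs (h z - h (z + INR k / 2)) <= INR k * W.
Proof.
  intros H k. induction k as [|k IH].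
  - simpl. replace (z + 0/2) with z by field. rewrite Rminus_diag, Rabs_R0. lra.
  - rewrite S_INR.
    replace (h z - h (z + (INR k + 1) / 2)) with
      ((h z - h (z + INR k / 2)) + (h (z + INR k / 2) - h (z + (INR k + 1) / 2))) by ring.
    eapply Rle_trans; [apply Rabs_triang|].
    assert (Rabs (h (z + INR k / 2) - h (z + (INR k + 1) / 2)) <= W).
    { apply H. replace (z + INR k / 2 - (z + (INR k + 1) / 2)) with (-(1/2)) by field.
      rewrite Rabs_Ropp, Rabs_right; lra. }
    lra.
Qed.

Lemma Mf_bound (K : R -> Prop) m0 M0 N f' Df Mf w :
  (forall z, K z -> m0 <= z <= M0) -> 2 * (M0 - m0) < INR N ->
  (forall z, ~ K z -> f' z = 0) ->
  (forall r, 0 < r <= 1 -> modulus_at f' r (w r)) ->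
  improper_int_01 (fun r => w r / r) Df -> sup_norm f' Mf ->
  Mf <= 2 * INR N * Df /\ 0 <= Df /\ 0 <= Mf.
Proof.
  intros HK HN Hsupp Hw Hd Hs.
  assert (Hwh := w_half_le f' w Df Hw Hd).
  assert (Hw0 : 0 <= w (1/2)) by (apply (modulus_nonneg f' (1/2)); [lra|apply Hw; lra]).
  assert (HN0 : 0 <= INR N) by apply pos_INR.
  assert (HM0 : 0 <= Mf) by (eapply Rle_trans; [apply Rabs_pos|apply (sup_le f' Mf 0 Hs)]).
  split; [|split; [lra|exact HM0]].
  destruct Hs as [_ Hlub]. apply Hlub. intros v [z ->].
  destruct (classic (K z)) as [Kz|nKz].
  - assert (Hc := chain f' (w (1/2)) z (fun u v Huv => modulus_le f' (1/2) (w (1/2)) u v ltac:(apply Hw; lra) Huv) N).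
    destruct (HK z Kz) as [Hz1 Hz2].
    rewrite (Hsupp (z + INR N / 2)) in Hc.
    + rewrite Rminus_0_r in Hc. nra.
    + intros Kz'. destruct (HK _ Kz'). lra.
  - rewrite Hsupp by exact nKz. rewrite Rabs_R0. nra.
Qed.

Lemma int_atan a u v : 0 < a ->
  is_RInt (fun y => a / (y^2 + a^2)) u v (atan (v/a) - atan (u/a)).
Proof.
  intros Ha.
  apply (is_RInt_derive (V:=R_CompleteNormedModule) (fun y => atan (y/a))); intros x _.
  - auto_derive; [trivial|]. simpl. assert (0 < x*x + a*a) by nra. field_simplify; try reflexivity; try split; lra.
  - apply (ex_derive_continuous (K:=R_AbsRing) (V:=R_NormedModule) (fun y => a / (y^2 + a^2))).
    auto_derive. pose proof (pow2_ge_0 x). nra.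
Qed.

Lemma Dd_small g a t : 0 < t -> Rabs (Dd g a t) <= 2 * a / t * 1 -> True.
Proof. auto. Qed.

Lemma Dd_lip g a t : 0 < a -> 0 < t -> Rabs (Dd g a t) <= 2 * a / t.
Proof.
  intros Ha Ht. unfold Dd. eapply Rle_trans; [apply atan_lip|].
  replace ((g t - a) / t - (g t + a) / t) with (- (2 * a / t)) by (field; lra).
  rewrite Rabs_Ropp, Rabs_right; [lra|]. apply Rle_ge, Rlt_le, Rdiv_lt_0_compat; lra.
Qed.

Lemma atan_nonneg t : 0 <= t -> 0 <= atan t.
Proof.
  intros Ht. destruct (Req_dec t 0) as [->|Hn]; [rewrite atan_0; lra|].
  rewrite <- atan_0. left. apply atan_increasing. lra.
Qed.

Lemma int_bound g1 p1 g2 p2 a b Mf Df w Y :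
  0 < a -> 1 <= Y -> Rabs b <= Mf ->
  g1 0 = a -> g2 0 = a -> (forall y, 0 <= g1 y) -> (forall y, 0 <= g2 y) ->
  (forall y, is_derive g1 y (p1 y)) -> (forall y, is_derive g2 y (p2 y)) ->
  (forall y, continuous p1 y) -> (forall y, continuous p2 y) ->
  (forall y, Rabs (p1 y) <= Mf) -> (forall y, Rabs (p2 y) <= Mf) ->
  (forall y, 0 < y <= 1 -> Rabs (p1 y - b) <= w y /\ Rabs (p2 y + b) <= w y /\
       Rabs ((g1 y - a)/y - b) <= w y /\ Rabs ((g2 y - a)/y + b) <= w y) ->
  improper_int_01 (fun r => w r / r) Df ->
  Rabs (RInt (qext g1 p1 a) 0 Y + RInt (qext g2 p2 a) 0 Y) <=
    a * ((4 + 4*Mf) * Df + 16*PI*Mf*(1+Mf) + 4*Mf*(Y-1)).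
Proof.
  intros Ha HY Hb H10 H20 H1p H2p H1d H2d H1c H2c H1M H2M Hpw Hdini.
  assert (HPI := PI_RGT_0).
  assert (HMf : 0 <= Mf) by (eapply Rle_trans; [apply Rabs_pos|exact Hb]).
  set (q1 := qext g1 p1 a). set (q2 := qext g2 p2 a).
  set (S := fun y => q1 y + q2 y).
  assert (Ex1 : forall u v, 0 <= u -> 0 <= v -> ex_RInt q1 u v)
    by (intros; apply (qext_ex g1 p1 a Mf); auto).
  assert (Ex2 : forall u v, 0 <= u -> 0 <= v -> ex_RInt q2 u v)
    by (intros; apply (qext_ex g2 p2 a Mf); auto).
  assert (ExS : forall u v, 0 <= u -> 0 <= v -> ex_RInt S u v)
    by (intros u v Hu Hv; exact (ex_RInt_plus (V:=R_NormedModule) q1 q2 u v (Ex1 u v Hu Hv) (Ex2 u v Hu Hv))).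
  assert (ES : RInt q1 0 Y + RInt q2 0 Y = RInt S 0 Y).
  { symmetry. exact (RInt_plus (V:=R_CompleteNormedModule) q1 q2 0 Y (Ex1 0 Y ltac:(lra) ltac:(lra)) (Ex2 0 Y ltac:(lra) ltac:(lra))). }
  rewrite ES.
  assert (C := RInt_Chasles (V:=R_CompleteNormedModule) S 0 1 Y (ExS 0 1 ltac:(lra) ltac:(lra)) (ExS 1 Y ltac:(lra) ltac:(lra))).
  unfold plus in C; simpl in C. rewrite <- C.
  assert (BF : Rabs (RInt S 1 Y) <= (Y - 1) * (4 * Mf * a)).
  { apply abs_RInt_le_const; [lra|apply ExS; lra|]. intros t Ht.
    unfold S, q1, q2, qext. destruct (Rlt_dec 0 t) as [_|]; [|lra].
    eapply Rle_trans; [apply Rabs_triang|]. rewrite !Rabs_mult.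
    assert (Hd1 := Dd_lip g1 a t Ha ltac:(lra)). assert (Hd2 := Dd_lip g2 a t Ha ltac:(lra)).
    assert (Ht2 : 2 * a / t <= 2 * a).
    { unfold Rdiv. rewrite <- (Rmult_1_r (2*a)) at 2. apply Rmult_le_compat_l; [lra|].
      rewrite <- Rinv_1. apply Rinv_le_contravar; lra. }
    assert (Rabs (p1 t) * Rabs (Dd g1 a t) <= Mf * (2 * a)).
    { apply Rmult_le_compat; try apply Rabs_pos; auto; lra. }
    assert (Rabs (p2 t) * Rabs (Dd g2 a t) <= Mf * (2 * a)).
    { apply Rmult_le_compat; try apply Rabs_pos; auto; lra. }
    lra. }
  assert (BN : Rabs (RInt S 0 1) <= a * (4 + 4 * Mf) * Df + a * (16 * PI * Mf * (1 + Mf))).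
  { apply Rle_plus_epsilon. intros eps Heps.
    set (c1 := a * (4 + 4 * Mf) + 1).
    assert (Hc1 : 0 < c1) by (unfold c1; nra).
    destruct (dini_int w Df Hdini (eps / (2 * c1))) as [del [Hdel Hdi]].
    { apply Rdiv_lt_0_compat; lra. }
    set (al := Rmin (del/2) (Rmin (1/2) (eps / (2 * (2 * Mf * PI + 1))))).
    assert (Hal0 : 0 < al).
    { unfold al. repeat apply Rmin_pos; try lra. apply Rdiv_lt_0_compat; nra. }
    assert (Hald : al < del) by (unfold al; eapply Rle_lt_trans; [apply Rmin_l|lra]).
    assert (Hal1 : al <= 1/2) by (unfold al; eapply Rle_trans; [apply Rmin_r|apply Rmin_l]).
    assert (Hale : al <= eps / (2 * (2 * Mf * PI + 1)))
      by (unfold al; eapply Rle_trans; [apply Rmin_r|apply Rmin_r]).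
    destruct (Hdi al ltac:(lra) ltac:(lra)) as [ExW HW].
    assert (C2 := RInt_Chasles (V:=R_CompleteNormedModule) S 0 al 1 (ExS 0 al ltac:(lra) ltac:(lra)) (ExS al 1 ltac:(lra) ltac:(lra))).
    unfold plus in C2; simpl in C2. rewrite <- C2.
    assert (B0 : Rabs (RInt S 0 al) <= (al - 0) * (Mf * PI + Mf * PI)).
    { apply abs_RInt_le_const; [lra|apply ExS; lra|]. intros t Ht.
      eapply Rle_trans; [apply Rabs_triang|]. apply Rplus_le_compat; apply qext_bnd; auto. }
    assert (B0' : (al - 0) * (Mf * PI + Mf * PI) <= eps / 2).
    { rewrite Rminus_0_r. apply Rle_trans with (eps / (2 * (2 * Mf * PI + 1)) * (Mf * PI + Mf * PI)).
      - apply Rmult_le_compat_r; [nra|exact Hale].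
      - replace (eps / (2 * (2 * Mf * PI + 1)) * (Mf * PI + Mf * PI)) with
          (eps / 2 * ((2 * Mf * PI) / (2 * Mf * PI + 1))) by (field; nra).
        rewrite <- (Rmult_1_r (eps/2)) at 2. apply Rmult_le_compat_l; [lra|].
        apply (Rmult_le_reg_r (2 * Mf * PI + 1)); [nra|]. unfold Rdiv.
        rewrite Rmult_assoc, Rinv_l by nra. lra. }
    set (B := fun y => a * ((4 + 4*Mf) * (w y / y) + 32*Mf*(1+Mf) * (a/(y^2+a^2)))).
    set (VB := a * ((4 + 4*Mf) * RInt (fun r => w r / r) al 1 + 32*Mf*(1+Mf) * (atan (1/a) - atan (al/a)))).
    assert (IB : is_RInt B al 1 VB).
    { apply (RInt_correct (V:=R_CompleteNormedModule)) in ExW.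
      assert (I2 := int_atan a al 1 Ha).
      assert (I3 := is_RInt_scal _ _ _ a _ (is_RInt_plus _ _ _ _ _ _
                 (is_RInt_scal _ _ _ (4 + 4 * Mf) _ ExW) (is_RInt_scal _ _ _ (32*Mf*(1+Mf)) _ I2))).
      eapply is_RInt_ext; [|exact I3]. intros x _. reflexivity. }
    assert (ExA : ex_RInt (fun t => Rabs (S t)) al 1).
    { apply (ex_RInt_continuous (V:=R_CompleteNormedModule)). intros z Hz.
      rewrite Rmin_left in Hz by lra. apply continuous_Rabs_comp.
      apply (continuous_plus (V:=R_NormedModule) q1 q2).
      - apply qext_cont_pos; [lra|apply H1d|apply H1c].
      - apply qext_cont_pos; [lra|apply H2d|apply H2c]. }
    assert (BS : Rabs (RInt S al 1) <= VB).
    { eapply Rle_trans; [apply abs_RInt_le; [lra|apply ExS; lra]|].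
      rewrite <- (is_RInt_unique _ _ _ _ IB).
      apply RInt_le; [lra|exact ExA|exists VB; exact IB|]. intros x Hx.
      destruct (Hpw x ltac:(lra)) as [P1 [P2 [P3 P4]]].
      unfold S, q1, q2, qext, Dd. destruct (Rlt_dec 0 x) as [_|]; [|lra].
      unfold B. apply (pw_bound a x b Mf (w x)); auto; lra. }
    assert (HVB : VB <= a * ((4 + 4*Mf) * (Df + eps / (2 * c1)) + 32*Mf*(1+Mf) * (PI/2))).
    { unfold VB. apply Rmult_le_compat_l; [lra|]. apply Rplus_le_compat.
      - apply Rmult_le_compat_l; [lra|exact HW].
      - apply Rmult_le_compat_l; [nra|]. pose proof (atan_bound (1/a)).
        assert (0 <= atan (al/a)) by (apply atan_nonneg; apply Rdiv_le_0_compat; lra). lra. }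
    assert (HE : a * (4 + 4 * Mf) * (eps / (2 * c1)) <= eps / 2).
    { replace (a * (4 + 4 * Mf) * (eps / (2 * c1))) with (eps / 2 * (a * (4 + 4 * Mf) / c1)) by (field; lra).
      rewrite <- (Rmult_1_r (eps/2)) at 2. apply Rmult_le_compat_l; [lra|].
      apply (Rmult_le_reg_r c1); [lra|]. unfold Rdiv. rewrite Rmult_assoc, Rinv_l by lra.
      unfold c1; lra. }
    eapply Rle_trans; [apply Rabs_triang|]. nra. }
  eapply Rle_trans; [apply Rabs_triang|]. nra.
Qed.

Lemma deriv_shift (f f' : R -> R) x y : (forall z, derivable_pt_lim f z (f' z)) ->
  is_derive (fun y => f (x + y)) y (f' (x + y)).
Proof.
  intros H. assert (D := is_derive_comp (K:=R_AbsRing) (V:=R_NormedModule) f (fun y => x + y) y (f' (x+y)) 1).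
  replace (f' (x + y)) with (scal 1 (f' (x + y))) by (unfold scal; simpl; unfold mult; simpl; ring).
  apply D.
  - apply is_derive_Reals, H.
  - auto_derive; [trivial|ring].
Qed.

Lemma deriv_refl (f f' : R -> R) x y : (forall z, derivable_pt_lim f z (f' z)) ->
  is_derive (fun y => f (x + - y)) y (- f' (x + - y)).
Proof.
  intros H. assert (D := is_derive_comp (K:=R_AbsRing) (V:=R_NormedModule) f (fun y => x + - y) y (f' (x + - y)) (-1)).
  replace (- f' (x + - y)) with (scal (-1) (f' (x + - y))) by (unfold scal; simpl; unfold mult; simpl; ring).
  apply D.
  - apply is_derive_Reals, H.
  - auto_derive; [trivial|ring].
Qed.

Lemma cont_shift (h : R -> R) x y : continuity h -> continuous (fun y => h (x + y)) y.
Proof.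
  intros H. apply (continuous_comp (fun y => x + y) h).
  - apply (ex_derive_continuous (K:=R_AbsRing) (V:=R_NormedModule) (fun y => x + y)). auto_derive. trivial.
  - apply continuity_pt_filterlim, H.
Qed.

Lemma cont_refl (h : R -> R) x y : continuity h -> continuous (fun y => - h (x + - y)) y.
Proof.
  intros H. apply (continuous_comp (fun y => x + - y) (fun z => - h z)).
  - apply (ex_derive_continuous (K:=R_AbsRing) (V:=R_NormedModule) (fun y => x + - y)). auto_derive. trivial.
  - apply continuity_pt_filterlim. apply continuity_pt_opp, H.
Qed.

Lemma zero_improper (g : R -> R) : (forall y, 0 < y -> g y = 0) -> improper_int_pos g 0.
Proof.
  intros H. split.
  - intros a b Ha Hab. constructor. apply ex_RInt_Reals_0.
    apply (ex_RInt_ext (V:=R_CompleteNormedModule) (fun _ => 0)).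
    + intros x Hx. rewrite Rmin_left in Hx by lra. rewrite H by lra. reflexivity.
    + apply (ex_RInt_const (V:=R_NormedModule)).
  - intros eta Heta. exists 1, 0. split; [lra|]. intros a b Ha Hb Hab pr.
    rewrite <- RInt_Reals. rewrite (RInt_ext _ (fun _ => 0)).
    + rewrite RInt_const. unfold scal; simpl; unfold mult; simpl.
      rewrite Rmult_0_r, Rminus_0_r, Rabs_R0. lra.
    + intros x Hx. rewrite Rmin_left in Hx by lra. apply H. lra.
Qed.

Lemma le_1_pow x k : 0 <= x -> (1 <= k)%nat -> x <= 1 + x ^ k.
Proof.
  intros Hx Hk. destruct (Rle_dec x 1).
  - assert (0 <= x ^ k) by (apply pow_le; lra). lra.
  - assert (x ^ 1 <= x ^ k) by (apply Rle_pow; [lra|exact Hk]). simpl in H. lra.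
Qed.

Lemma poly_bound Mf Df cK Y : 0 <= Mf -> 0 <= Df -> 0 <= cK -> 1 <= Y -> Mf <= cK * Df ->
  (4 + 4*Mf) * Df + 16*PI*Mf*(1+Mf) + 4*Mf*(Y-1)
  <= (8 + 32*PI*cK + 4*(Y-1)*cK) * (Df * (1 + Mf^5)).
Proof.
  intros HM HD HK HY Hle.
  assert (HPI := PI_RGT_0).
  set (t := 1 + Mf^5).
  assert (Ht1 : Mf <= t) by (apply le_1_pow; [lra|lia]).
  assert (Ht2 : 1 <= t) by (unfold t; pose proof (pow_le Mf 5 HM); lra).
  assert (A1 : Df <= Df * t) by nra.
  assert (A2 : Mf * Df <= Df * t) by nra.
  assert (A3 : Mf <= cK * (Df * t)) by nra.
  assert (A4 : Mf * Mf <= cK * (Df * t)).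
  { apply Rle_trans with (cK * Df * Mf); [nra|]. assert (0 <= cK * Df) by nra. nra. }
  assert (0 <= Y - 1) by lra.
  assert (A5 : Mf * (Y - 1) <= (Y - 1) * cK * (Df * t)) by nra.
  nra.
Qed.

Lemma mvt_quot f f' w x y : (forall z, derivable_pt_lim f z (f' z)) -> 0 < y -> modulus_at f' y w ->
  Rabs ((f (x + y) - f x)/y - f' x) <= w /\ Rabs ((f (x + - y) - f x)/y + f' x) <= w.
Proof.
  intros Hd Hy Hm. split.
  - destruct (MVT_cor2 f f' x (x + y)) as [c [Hc1 Hc2]]; [lra|intros; apply Hd|].
    replace ((f (x + y) - f x)/y) with (f' c) by (rewrite Hc1; field; lra).
    apply (modulus_le f' y); [exact Hm|]. rewrite Rabs_right; lra.
  - destruct (MVT_cor2 f f' (x - y) x) as [c [Hc1 Hc2]]; [lra|intros; apply Hd|].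
    replace ((f (x + - y) - f x)/y) with (- f' c).
    2:{ replace (x + - y) with (x - y) by ring.
        replace (f (x - y) - f x) with (- (f x - f (x - y))) by ring. rewrite Hc1. field. lra. }
    replace (- f' c + f' x) with (f' x - f' c) by ring.
    apply (modulus_le f' y); [exact Hm|]. rewrite Rabs_right; lra.
Qed.

Theorem mainTheorem7 :
  forall K : R -> Prop, compact K ->
  exists C : R,
  forall (f f' : R -> R),
    continuity f ->
    (forall x, 0 <= f x) ->
    (forall x, ~ K x -> f x = 0) ->
    (forall x, derivable_pt_lim f x (f' x)) ->
    in_Cstar K f' ->
    forall Df Mf, dini_norm f' Df -> sup_norm f' Mf ->
    exists U Rm : R -> R,
      (forall x, improper_int_R (u2_integrand f x) (f x * U x)) /\
      (forall x, f x * U x = - f x * (1 + Rm x)) /\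
      (forall x, Rabs (U x) <= C * (1 + Df ^ 6)) /\
      (forall x, Rabs (Rm x) <= C * Df * (1 + Mf ^ 5)).
Proof.
  intros K HK.
  destruct (compact_P1 K HK) as [m0 [M0 HKb]].
  destruct (nat_above (2 * (M0 - m0))) as [N HN].
  assert (HPI := PI_RGT_0).
  set (cK := 2 * INR N).
  assert (HcK : 0 <= cK) by (unfold cK; pose proof (pos_INR N); lra).
  set (Y := Rabs (M0 - m0) + 1).
  assert (HY : 1 <= Y) by (unfold Y; pose proof (Rabs_pos (M0 - m0)); lra).
  set (CR := (8 + 32*PI*cK + 4*(Y-1)*cK) / (2*PI)).
  assert (HCR : 0 <= CR) by (unfold CR; apply Rdiv_le_0_compat; nra).
  exists (1 + CR + CR * cK^5).
  intros f f' Hfc Hfpos Hfsupp Hder Hcstar Df Mf Hdini Hsup.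
  destruct Hcstar as [_ [Hf'c [Hf'supp _]]].
  destruct Hdini as [w [Hw Hwint]].
  destruct (Mf_bound K m0 M0 N f' Df Mf w HKb HN Hf'supp Hw Hwint Hsup) as [HMD [HDf HMf]].
  fold cK in HMD.
  set (g1 := fun x y => f (x + y)). set (p1 := fun x y => f' (x + y)).
  set (g2 := fun x y => f (x + - y)). set (p2 := fun x y => - f' (x + - y)).
  set (I1 := fun x => RInt (qext (g1 x) (p1 x) (f x)) 0 Y).
  set (I2 := fun x => RInt (qext (g2 x) (p2 x) (f x)) 0 Y).
  set (Rm := fun x => if Rlt_dec 0 (f x) then - (I1 x + I2 x) / (2 * PI * f x) else 0).
  set (U := fun x => if Rlt_dec 0 (f x) then - (1 + Rm x) else 0).
  exists U, Rm.
  assert (Far : forall x y, 0 < f x -> Y <= y ->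
            g1 x y = 0 /\ p1 x y = 0 /\ g2 x y = 0 /\ p2 x y = 0).
  { intros x y Hx Hy.
    assert (Kx : K x) by (apply NNPP; intros nK; rewrite Hfsupp in Hx by exact nK; lra).
    destruct (HKb x Kx) as [Hx1 Hx2].
    assert (HYm : M0 - m0 < Y) by (unfold Y; pose proof (Rle_abs (M0 - m0)); lra).
    assert (N1 : ~ K (x + y)) by (intros Kz; destruct (HKb _ Kz); lra).
    assert (N2 : ~ K (x + - y)) by (intros Kz; destruct (HKb _ Kz); lra).
    unfold g1, p1, g2, p2. rewrite Hfsupp, Hf'supp, Hfsupp, Hf'supp by assumption.
    repeat split; ring. }
  assert (Facts : forall x, 0 < f x ->
     g1 x 0 = f x /\ g2 x 0 = f x /\ (forall y, 0 <= g1 x y) /\ (forall y, 0 <= g2 x y) /\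
     (forall y, is_derive (g1 x) y (p1 x y)) /\ (forall y, is_derive (g2 x) y (p2 x y)) /\
     (forall y, continuous (p1 x) y) /\ (forall y, continuous (p2 x) y) /\
     (forall y, Rabs (p1 x y) <= Mf) /\ (forall y, Rabs (p2 x y) <= Mf)).
  { intros x Hx. unfold g1, g2, p1, p2.
    split; [rewrite Rplus_0_r; reflexivity|].
    split; [rewrite Ropp_0, Rplus_0_r; reflexivity|].
    split; [intros y; apply Hfpos|].
    split; [intros y; apply Hfpos|].
    split; [intros y; exact (deriv_shift f f' x y Hder)|].
    split; [intros y; exact (deriv_refl f f' x y Hder)|].
    split; [intros y; exact (cont_shift f' x y Hf'c)|].
    split; [intros y; exact (cont_refl f' x y Hf'c)|].
    split; [intros y; apply sup_le, Hsup|].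
    intros y. rewrite Rabs_Ropp. apply sup_le, Hsup. }
  assert (SideOK : forall x, 0 < f x ->
     improper_int_pos (Fint (g1 x) (f x)) (- f x / 2 + / (2 * PI) * I1 x) /\
     improper_int_pos (Fint (g2 x) (f x)) (- f x / 2 + / (2 * PI) * I2 x)).
  { intros x Hx. destruct (Facts x Hx) as [G10 [G20 [G1p [G2p [D1 [D2 [C1 [C2 [B1 B2]]]]]]]]].
    split.
    - exact (side (g1 x) (p1 x) (f x) Y Mf Hx G10 G1p D1 C1 ltac:(lra)
               (fun y Hy => proj1 (Far x y Hx Hy)) (fun y Hy => proj1 (proj2 (Far x y Hx Hy))) B1).
    - exact (side (g2 x) (p2 x) (f x) Y Mf Hx G20 G2p D2 C2 ltac:(lra)
               (fun y Hy => proj1 (proj2 (proj2 (Far x y Hx Hy)))) (fun y Hy => proj2 (proj2 (proj2 (Far x y Hx Hy)))) B2). }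
  assert (IntB : forall x, 0 < f x ->
     Rabs (I1 x + I2 x) <= f x * ((4 + 4*Mf) * Df + 16*PI*Mf*(1+Mf) + 4*Mf*(Y-1))).
  { intros x Hx. destruct (Facts x Hx) as [G10 [G20 [G1p [G2p [D1 [D2 [C1 [C2 [B1 B2]]]]]]]]].
    apply (int_bound (g1 x) (p1 x) (g2 x) (p2 x) (f x) (f' x) Mf Df w Y Hx HY
             (sup_le f' Mf x Hsup) G10 G20 G1p G2p D1 D2 C1 C2 B1 B2); [|exact Hwint].
    intros y Hy. destruct (mvt_quot f f' (w y) x y Hder ltac:(lra) (Hw y Hy)) as [M1 M2].
    unfold g1, p1, g2, p2. repeat split; auto.
    + apply (modulus_le f' y); [apply Hw; exact Hy|]. replace (x + y - x) with y by ring.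
      rewrite Rabs_right; lra.
    + replace (- f' (x + - y) + f' x) with (f' x - f' (x + - y)) by ring.
      apply (modulus_le f' y); [apply Hw; exact Hy|]. replace (x - (x + - y)) with y by ring.
      rewrite Rabs_right; lra. }
  assert (RmB : forall x, Rabs (Rm x) <= CR * (Df * (1 + Mf^5))).
  { intros x. unfold Rm. destruct (Rlt_dec 0 (f x)) as [Hx|Hx].
    - unfold Rdiv. rewrite Rabs_mult, Rabs_Ropp.
      rewrite (Rabs_right (/ _)) by (apply Rle_ge, Rlt_le, Rinv_0_lt_compat; nra).
      apply (Rmult_le_reg_r (2 * PI * f x)); [nra|]. rewrite Rmult_assoc, Rinv_l by nra.
      rewrite Rmult_1_r. eapply Rle_trans; [apply IntB; exact Hx|].
      assert (PB := poly_bound Mf Df cK Y HMf HDf HcK HY HMD).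
      unfold CR. replace ((8 + 32 * PI * cK + 4 * (Y - 1) * cK) / (2 * PI) * (Df * (1 + Mf ^ 5)) * (2 * PI * f x))
        with (f x * ((8 + 32 * PI * cK + 4 * (Y - 1) * cK) * (Df * (1 + Mf ^ 5)))) by (field; lra).
      apply Rmult_le_compat_l; lra.
    - rewrite Rabs_R0. apply Rmult_le_pos; [lra|]. apply Rmult_le_pos; [lra|].
      pose proof (pow_le Mf 5 HMf). lra. }
  split; [|split; [|split]].
  - intros x. destruct (Rlt_dec 0 (f x)) as [Hx|Hx].
    + destruct (SideOK x Hx) as [S1 S2].
      exists (- f x / 2 + / (2 * PI) * I1 x), (- f x / 2 + / (2 * PI) * I2 x).
      split; [exact S1|]. split.
      * replace (fun y => u2_integrand f x (- y)) with (Fint (g2 x) (f x)); [exact S2|].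
        apply functional_extensionality. intros y. unfold Fint, u2_integrand, g2.
        replace ((- y) ^ 2) with (y ^ 2) by ring. reflexivity.
      * unfold U, Rm. destruct (Rlt_dec 0 (f x)); [|lra]. field. lra.
    + assert (Hx0 : f x = 0) by (pose proof (Hfpos x); lra).
      assert (Z : forall y, 0 < y -> u2_integrand f x y = 0 /\ u2_integrand f x (- y) = 0).
      { intros y Hy. unfold u2_integrand. rewrite Hx0, !Rminus_0_r, !Rplus_0_r.
        assert (0 < y^2 + f (x + y) ^ 2) by (pose proof (pow2_ge_0 (f (x+y))); nra).
        assert (0 < (-y)^2 + f (x + - y) ^ 2) by (pose proof (pow2_ge_0 (f (x + - y))); nra).
        rewrite !Rdiv_diag by lra. rewrite ln_1. split; ring. }
      exists 0, 0. split; [|split].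
      * apply zero_improper. intros y Hy. apply Z, Hy.
      * apply zero_improper. intros y Hy. apply Z, Hy.
      * rewrite Hx0. ring.
  - intros x. unfold U. destruct (Rlt_dec 0 (f x)); [ring|].
    assert (Hx0 : f x = 0) by (pose proof (Hfpos x); lra). rewrite Hx0. ring.
  - intros x. unfold U. destruct (Rlt_dec 0 (f x)) as [Hx|Hx].
    + rewrite Rabs_Ropp. eapply Rle_trans; [apply Rabs_triang|]. rewrite Rabs_R1.
      eapply Rle_trans; [apply Rplus_le_compat_l, RmB|].
      assert (P5 : Mf ^ 5 <= cK^5 * Df^5) by (rewrite <- Rpow_mult_distr; apply pow_incr; lra).
      assert (D6 : Df <= 1 + Df ^ 6) by (apply le_1_pow; [lra|lia]).
      assert (E6 : Df * Df ^ 5 = Df ^ 6) by ring.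
      assert (0 <= Df ^ 6) by (apply pow_le; lra).
      assert (0 <= cK ^ 5) by (apply pow_le; lra).
      assert (Df * (1 + Mf ^ 5) <= (1 + Df^6) + cK^5 * Df^6).
      { rewrite Rmult_plus_distr_l, Rmult_1_r. rewrite <- E6.
        assert (Df * Mf ^ 5 <= Df * (cK ^ 5 * Df ^ 5)) by (apply Rmult_le_compat_l; lra). nra. }
      assert (0 <= CR * cK^5) by nra.
      assert (CR * (Df * (1 + Mf ^ 5)) <= CR * (1 + Df^6) + CR * cK^5 * (1 + Df^6)).
      { apply Rle_trans with (CR * ((1 + Df^6) + cK^5 * Df^6)); [apply Rmult_le_compat_l; lra|]. nra. }
      nra.
    + rewrite Rabs_R0. apply Rmult_le_pos; [|pose proof (pow_le Df 6 HDf); lra].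
      assert (0 <= CR * cK^5) by (apply Rmult_le_pos; [lra|apply pow_le; lra]). lra.
  - intros x. eapply Rle_trans; [apply RmB|].
    assert (0 <= Df * (1 + Mf ^ 5)) by (apply Rmult_le_pos; [lra|pose proof (pow_le Mf 5 HMf); lra]).
    assert (0 <= CR * cK^5) by (apply Rmult_le_pos; [lra|apply pow_le; lra]).
    rewrite Rmult_assoc. apply Rmult_le_compat_r; lra.
Qed.
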